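(* Let $d\ge2$, $\kappa,l>0$, $\lambda\in\mathbb R$, $k\in\{-1,0,1\}$ and $\mu\in\mathbb R$. On the open set of $(A,\phi)\in\mathbb R^2$ where the quantities under the square roots below are positive, define $$\pi_\phi(A,\phi)=\pm e^{dA}\sqrt{\frac{d(d-1)}{\kappa^2l^2}\mu e^{-(d+1)A}+k\Big(\frac{d-1}{2l}\Big)^2\phi^2e^{-2A}+\lambda\phi^{\frac{2(d+1)}{d-1}}},$$ $$\pi_A(A,\phi)=-\frac{d(d-1)}{\kappa^2l}e^{dA}\sqrt{1+ke^{-2A}+\mu e^{-(d+1)A}}+\frac{d-1}2\phi\,\pi_\phi(A,\phi).$$ Then (i) $\mathcal H(A,\phi,\pi_A(A,\phi),\pi_\phi(A,\phi))=0$ identically, where $$\mathcal H=\frac12\Big\{e^{-dA}\Big(\pi_\phi^2-\frac{\kappa^2}{d(d-1)}\big(\pi_A-\tfrac{d-1}2\phi\pi_\phi\big)^2\Big)+e^{dA}\Big(\frac{d(d-1)}{\kappa^2l^2}-\lambda\phi^{\frac{2(d+1)}{d-1}}+\frac{d(d-1)k}{\kappa^2l^2}e^{-2A}\big(1-\tfrac{(d-1)\kappa^2}{4d}\phi^2\big)\Big)\Big\};$$ (ii) $\partial\pi_A/\partial\phi=\partial\pi_\phi/\partial A$. Consequently, locally there is a function $\mathcal S(A,\phi)$ (depending on the arbitrary constant $\mu$) with $\pi_A=\partial_A\mathcal S$, $\pi_\phi=\partial_\phi\mathcal S$, which is a complete integral of the Hamilton–Jacobi equation $\mathcal H(A,\phi,\partial_A\mathcal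 S,\partial_\phi\mathcal S)=0$.
   Context: $\mathcal H$ is the radial Hamiltonian of the action $\int d^{d+1}x\sqrt g\big(-\frac{1}{2\kappa^2}(R+\frac{d(d-1)}{l^2})+\frac12(\partial\phi)^2+\frac{d-1}{8d}R\phi^2+\frac\lambda2\phi^{2(d+1)/(d-1)}\big)$ reduced to metrics $ds^2=dr^2+e^{2A(r)}g^{(0)}_{ij}dx^idx^j$ with $g^{(0)}$ of constant scalar curvature $kd(d-1)/l^2$ and $\phi=\phi(r)$; here $\pi_A$, $\pi_\phi$ are the momenta conjugate to $A$ and $\phi$. *)

(* Defs.v *)
From Stdlib Require Import Reals.
From Coquelicot Require Import Coquelicot.
Open Scope R_scope.

(* |x|^p, with the convention 0^p = 0 (p > 0 here). Used for phi^{2(d+1)/(d-1)}. *)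
Definition rpow_abs (x p : R) : R :=
  if Req_EM_T x 0 then 0 else Rpower (Rabs x) p.

Definition pexp (d : nat) : R := 2 * (INR d + 1) / (INR d - 1).

Definition Xphi (d : nat) (kap l lam k mu A phi : R) : R :=
  INR d * (INR d - 1) / (kap ^ 2 * l ^ 2) * mu * exp (- (INR d + 1) * A)
  + k * ((INR d - 1) / (2 * l)) ^ 2 * phi ^ 2 * exp (-2 * A)
  + lam * rpow_abs phi (pexp d).

Definition XA (d : nat) (k mu A : R) : R :=
  1 + k * exp (-2 * A) + mu * exp (- (INR d + 1) * A).

Definition dom (d : nat) (kap l lam k mu A phi : R) : Prop :=
  0 < Xphi d kap l lam k mu A phi /\ 0 < XA d k mu A.

(* s = +1 or -1 is the sign choice "±" *)
Definition pi_phi (d : nat) (kap l lam k mu s A phi : R) : R :=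
  s * exp (INR d * A) * sqrt (Xphi d kap l lam k mu A phi).

Definition pi_A (d : nat) (kap l lam k mu s A phi : R) : R :=
  - (INR d * (INR d - 1) / (kap ^ 2 * l)) * exp (INR d * A) * sqrt (XA d k mu A)
  + (INR d - 1) / 2 * phi * pi_phi d kap l lam k mu s A phi.

Definition Ham (d : nat) (kap l lam k A phi pA pphi : R) : R :=
  1 / 2 *
  ( exp (- INR d * A) *
      (pphi ^ 2 - kap ^ 2 / (INR d * (INR d - 1)) * (pA - (INR d - 1) / 2 * phi * pphi) ^ 2)
  + exp (INR d * A) *
      (INR d * (INR d - 1) / (kap ^ 2 * l ^ 2) - lam * rpow_abs phi (pexp d)
       + INR d * (INR d - 1) * k / (kap ^ 2 * l ^ 2) * exp (-2 * A)
         * (1 - (INR d - 1) * kap ^ 2 / (4 * INR d) * phi ^ 2))).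

(* Main.v *)
Require Import Defs.
From Stdlib Require Import Reals Lra Psatz.
From Coquelicot Require Import Coquelicot.
Open Scope R_scope.

Lemma ra_nz x q : x <> 0 -> rpow_abs x q = exp (q * ln (Rabs x)).
Proof. intros H. unfold rpow_abs. destruct (Req_EM_T x 0); [contradiction|reflexivity]. Qed.

Lemma ra_0 q : rpow_abs 0 q = 0.
Proof. unfold rpow_abs. destruct (Req_EM_T 0 0); [reflexivity|contradiction]. Qed.

Lemma ra_sq x q : x^2 * rpow_abs x (q-2) = rpow_abs x q.
Proof.
  destruct (Req_dec x 0) as [->|H]. rewrite !ra_0; ring.
  rewrite !ra_nz by auto.
  assert (Ha: 0 < Rabs x) by (apply Rabs_pos_lt; auto).
  replace (q * ln (Rabs x)) with ((q-2) * ln (Rabs x) + (ln (Rabs x) + ln (Rabs x))) by ring.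
  rewrite exp_plus, exp_plus, exp_ln by auto.
  replace (Rabs x * Rabs x) with (x^2). ring.
  rewrite <- Rabs_mult. rewrite Rabs_right. ring. nra.
Qed.

Lemma ra_mulexp x q t : rpow_abs (x * exp t) q = rpow_abs x q * exp (q * t).
Proof.
  destruct (Req_dec x 0) as [->|H]. rewrite Rmult_0_l, !ra_0; ring.
  assert (He := exp_pos t).
  assert (Hx: x * exp t <> 0) by (apply Rmult_integral_contrapositive; split; lra).
  rewrite !ra_nz by auto. rewrite <- exp_plus. f_equal.
  rewrite Rabs_mult, (Rabs_right (exp t)) by lra.
  rewrite ln_mult by (try apply Rabs_pos_lt; auto). rewrite ln_exp. ring.
Qed.

Lemma ra_deriv q x : 2 <= q -> is_derive (fun y => rpow_abs y q) x (q * x * rpow_abs x (q-2)).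
Proof.
  intros Hq.
  destruct (Req_dec x 0) as [->|H].
  - apply is_derive_Reals. intros eps Heps.
    exists (mkposreal _ (Rmin_pos 1 eps Rlt_0_1 Heps)). intros h Hh Hlt. simpl in Hlt.
    rewrite Rplus_0_l, ra_0, Rminus_0_r, Rmult_0_r, Rmult_0_l, Rminus_0_r.
    rewrite ra_nz by auto.
    assert (Ha: 0 < Rabs h) by (apply Rabs_pos_lt; auto).
    assert (H1: Rabs h < 1) by (apply Rlt_le_trans with (1:=Hlt); apply Rmin_l).
    assert (H2: Rabs h < eps) by (apply Rlt_le_trans with (1:=Hlt); apply Rmin_r).
    assert (Hl: ln (Rabs h) < 0). { rewrite <- ln_1. apply ln_increasing; auto. }
    unfold Rdiv. rewrite Rabs_mult, Rabs_Rinv by auto.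
    rewrite Rabs_right by (left; apply exp_pos).
    replace (q * ln (Rabs h)) with ((q-1) * ln (Rabs h) + ln (Rabs h)) by ring.
    rewrite exp_plus, exp_ln by auto.
    replace (exp ((q - 1) * ln (Rabs h)) * Rabs h * / Rabs h) with (exp ((q - 1) * ln (Rabs h))) by (field; lra).
    apply Rle_lt_trans with (exp (ln (Rabs h))).
    + assert (H0: (q-1) * ln (Rabs h) <= ln (Rabs h)) by nra.
      destruct H0 as [H0|H0]. left; apply exp_increasing; auto. rewrite H0; lra.
    + rewrite exp_ln; auto.
  - apply is_derive_ext_loc with (f := fun y => exp (q/2 * ln (y*y))).
    + assert (Ha: 0 < Rabs x) by (apply Rabs_pos_lt; auto).
      exists (mkposreal _ Ha). intros y Hy.
      unfold ball in Hy; simpl in Hy. unfold AbsRing_ball, abs, minus, plus, opp in Hy; simpl in Hy.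
      assert (Hy0: y <> 0). { intros ->. rewrite Rplus_0_l, Rabs_Ropp in Hy. lra. }
      rewrite ra_nz by auto. f_equal.
      replace (y*y) with (Rabs y * Rabs y).
      rewrite ln_mult by (apply Rabs_pos_lt; auto). field.
      rewrite <- Rabs_mult. apply Rabs_right. nra.
    + assert (Hxx: 0 < x*x) by nra.
      evar (l0 : R).
      assert (HD : is_derive (fun y => exp (q/2 * ln (y*y))) x l0).
      { auto_derive. auto. unfold l0. reflexivity. }
      replace (q*x*rpow_abs x (q-2)) with l0; auto. unfold l0.
      assert (E: exp (q/2 * ln (x*x)) = rpow_abs x q).
      { rewrite ra_nz by auto. f_equal.
        replace (x*x) with (Rabs x * Rabs x).
        rewrite ln_mult by (apply Rabs_pos_lt; auto). field.
        rewrite <- Rabs_mult. apply Rabs_right. nra. }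
      rewrite E, <- (ra_sq x q). field. auto.
Qed.

Lemma pexp_a d : (2 <= d)%nat -> pexp d * ((INR d - 1)/2) = INR d + 1.
Proof. intros H. apply le_INR in H. simpl in H. unfold pexp. field. lra. Qed.

Lemma pexp_ge d : (2 <= d)%nat -> 2 <= pexp d.
Proof. intros H. apply le_INR in H. simpl in H. unfold pexp.
  apply Rmult_le_reg_r with (INR d - 1). lra. unfold Rdiv. rewrite Rmult_assoc, Rinv_l by lra. lra. Qed.

Lemma part1 d kap l lam k mu s A phi : (2 <= d)%nat -> 0 < kap -> 0 < l -> s^2 = 1 ->
  0 <= Xphi d kap l lam k mu A phi -> 0 <= XA d k mu A ->
  Ham d kap l lam k A phi (pi_A d kap l lam k mu s A phi) (pi_phi d kap l lam k mu s A phi) = 0.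
Proof.
  intros Hd Hk Hl Hs HX HA. apply le_INR in Hd. simpl in Hd.
  unfold Ham, pi_A, pi_phi.
  pose proof (sqrt_sqrt _ HX) as SX. pose proof (sqrt_sqrt _ HA) as SA.
  set (X := Xphi d kap l lam k mu A phi) in *. set (Y := XA d k mu A) in *.
  set (sx := sqrt X) in *. set (sy := sqrt Y) in *.
  set (E := exp (INR d * A)).
  assert (EE: exp (- INR d * A) = / E). { unfold E. rewrite <- exp_Ropp. f_equal; ring. }
  rewrite EE.
  assert (HE: 0 < E) by apply exp_pos.
  replace (- (INR d * (INR d - 1) / (kap ^ 2 * l)) * E * sy +
        (INR d - 1) / 2 * phi * (s * E * sx) -
        (INR d - 1) / 2 * phi * (s * E * sx)) with (- (INR d * (INR d - 1) / (kap ^ 2 * l)) * E * sy) by ring.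
  replace ((s * E * sx)^2) with (s^2 * E^2 * (sx * sx)) by ring.
  replace ((- (INR d * (INR d - 1) / (kap ^ 2 * l)) * E * sy)^2) with
    ((INR d * (INR d - 1) / (kap ^ 2 * l))^2 * E^2 * (sy * sy)) by ring.
  rewrite SX, SA, Hs. unfold X, Y, Xphi, XA. field. repeat split; lra.
Qed.

Lemma cplus {U : UniformSpace} (f g : U -> R) z : continuous f z -> continuous g z -> continuous (fun y => f y + g y) z.
Proof. intros. exact (continuous_plus f g z H H0). Qed.
Lemma cmult {U : UniformSpace} (f g : U -> R) z : continuous f z -> continuous g z -> continuous (fun y => f y * g y) z.
Proof. intros. exact (@continuous_mult U R_AbsRing f g z H H0). Qed.
Lemma cfst (f : R -> R) (z : R*R) : (forall x, ex_derive f x) -> continuous (fun y => f (fst y)) z.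
Proof. intros. destruct z as [a b]. apply (@continuous_comp _ R_UniformSpace R_UniformSpace fst f). apply continuous_fst. simpl. exact (@ex_derive_continuous R_AbsRing R_NormedModule f a (H a)). Qed.
Lemma csnd (f : R -> R) (z : R*R) : (forall x, ex_derive f x) -> continuous (fun y => f (snd y)) z.
Proof. intros. destruct z as [a b]. apply (@continuous_comp _ R_UniformSpace R_UniformSpace snd f). apply continuous_snd. simpl. exact (@ex_derive_continuous R_AbsRing R_NormedModule f b (H b)). Qed.


Lemma cont_Xphi d kap l lam k mu z : (2 <= d)%nat ->
  continuous (fun y : R*R => Xphi d kap l lam k mu (fst y) (snd y)) z.
Proof.
  intros Hd. pose proof (pexp_ge d Hd). unfold Xphi.
  apply cplus; [apply cplus|].
  - apply (cfst (fun a => INR d * (INR d - 1) / (kap ^ 2 * l ^ 2) * mu * exp (- (INR d + 1) * a))).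
    intros; auto_derive; auto.
  - apply cmult. apply (csnd (fun p => k * ((INR d - 1) / (2 * l)) ^ 2 * p ^ 2)). intros; auto_derive; auto.
    apply (cfst (fun a => exp (-2 * a))). intros; auto_derive; auto.
  - apply (csnd (fun p => lam * rpow_abs p (pexp d))). intros; auto_derive; auto.
    eexists; apply ra_deriv; auto.
Qed.

Lemma cont_XA d k mu z :
  continuous (fun y : R*R => XA d k mu (fst y)) z.
Proof. apply (cfst (fun a => XA d k mu a)). intros; unfold XA; auto_derive; auto. Qed.

Lemma dom_loc d kap l lam k mu A0 phi0 : (2 <= d)%nat -> dom d kap l lam k mu A0 phi0 ->
  exists eps : R, 0 < eps /\ forall A phi, Rabs (A - A0) < eps -> Rabs (phi - phi0) < eps ->
    dom d kap l lam k mu A phi.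
Proof.
  intros Hd [H1 H2].
  assert (L1 := cont_Xphi d kap l lam k mu (A0,phi0) Hd _ (open_gt 0 _ H1)).
  assert (L2 := cont_XA d k mu (A0,phi0) _ (open_gt 0 _ H2)).
  unfold filtermap in L1, L2. simpl in L1, L2.
  destruct (filter_and _ _ L1 L2) as [eps Heps].
  exists eps. split. apply cond_pos. intros A phi HA Hp.
  apply (Heps (A,phi)). split; simpl; auto.
Qed.

Definition Gf d kap l lam k mu u :=
  INR d * (INR d - 1) / (kap ^ 2 * l ^ 2) * mu + k * ((INR d - 1) / (2 * l)) ^ 2 * u ^ 2
  + lam * rpow_abs u (pexp d).
Definition gf d kap l lam k mu u := sqrt (Gf d kap l lam k mu u).
Definition hf d kap l k mu a :=
  - (INR d * (INR d - 1) / (kap ^ 2 * l)) * exp (INR d * a) * sqrt (XA d k mu a).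

Lemma Kid d kap l lam k mu A phi : (2 <= d)%nat ->
  exp (INR d * A) * sqrt (Xphi d kap l lam k mu A phi) =
  exp ((INR d - 1)/2 * A) * gf d kap l lam k mu (phi * exp ((INR d - 1)/2 * A)).
Proof.
  intros Hd.
  assert (E: Xphi d kap l lam k mu A phi = exp (- (INR d + 1) * A) * Gf d kap l lam k mu (phi * exp ((INR d - 1)/2 * A))).
  { unfold Xphi, Gf. rewrite ra_mulexp.
    replace (pexp d * ((INR d - 1) / 2 * A)) with ((INR d + 1) * A)
      by (rewrite <- (pexp_a d Hd); ring).
    replace ((phi * exp ((INR d - 1) / 2 * A))^2) with (phi^2 * (exp ((INR d - 1) / 2 * A) * exp ((INR d - 1) / 2 * A))) by ring.
    rewrite <- exp_plus.
    assert (X1: exp (- (INR d + 1) * A) * exp ((INR d - 1) / 2 * A + (INR d - 1) / 2 * A) = exp (-2*A)).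
    { rewrite <- exp_plus. f_equal. field. }
    assert (X2: exp (- (INR d + 1) * A) * exp ((INR d + 1) * A) = 1).
    { rewrite <- exp_plus, <- exp_0. f_equal. ring. }
    set (e1 := exp (- (INR d + 1) * A)) in *. set (u := exp ((INR d - 1) / 2 * A + (INR d - 1) / 2 * A)) in *.
    set (e3 := exp ((INR d + 1) * A)) in *. set (R := rpow_abs phi (pexp d)) in *.
    set (C := INR d * (INR d - 1) / (kap ^ 2 * l ^ 2)). set (c := ((INR d - 1) / (2 * l)) ^ 2).
    transitivity (C*mu*e1 + k*c*phi^2*(e1*u) + lam*R*(e1*e3)).
    rewrite X1, X2. ring. ring. }
  rewrite E, sqrt_mult_alt by (left; apply exp_pos). unfold gf.
  replace (exp (- (INR d + 1) * A)) with (exp (- (INR d + 1) / 2 * A) * exp (- (INR d + 1) / 2 * A))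
    by (rewrite <- exp_plus; f_equal; field).
  rewrite sqrt_square by (left; apply exp_pos).
  rewrite <- Rmult_assoc, <- exp_plus. f_equal. f_equal. field.
Qed.

Lemma dRInt (f : R -> R) x : (forall y, continuous f y) -> is_derive (RInt f 0) x (f x).
Proof.
  intros Hc. apply (is_derive_RInt f (RInt f 0) 0 x); auto.
  apply filter_forall. intros b. exact (@RInt_correct R_CompleteNormedModule f 0 b (@ex_RInt_continuous R_CompleteNormedModule f 0 b (fun z _ => Hc z))).
Qed.

Lemma cont_gf d kap l lam k mu x : (2 <= d)%nat -> continuous (gf d kap l lam k mu) x.
Proof.
  intros Hd. pose proof (pexp_ge d Hd). unfold gf.
  apply (@continuous_comp R_UniformSpace R_UniformSpace R_UniformSpace (Gf d kap l lam k mu) sqrt).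
  apply (@ex_derive_continuous R_AbsRing R_NormedModule). unfold Gf. auto_derive; auto.
  eexists; apply ra_deriv; auto.
  apply continuous_sqrt.
Qed.

Lemma cont_hf d kap l k mu x : continuous (hf d kap l k mu) x.
Proof.
  unfold hf.
  apply (cmult (fun a => - (INR d * (INR d - 1) / (kap ^ 2 * l)) * exp (INR d * a)) (fun a => sqrt (XA d k mu a))).
  apply (@ex_derive_continuous R_AbsRing R_NormedModule). auto_derive; auto.
  apply (@continuous_comp R_UniformSpace R_UniformSpace R_UniformSpace (XA d k mu) sqrt).
  apply (@ex_derive_continuous R_AbsRing R_NormedModule). unfold XA. auto_derive; auto.
  apply continuous_sqrt.
Qed.

Definition Sf d kap l lam k mu s a p :=
  RInt (hf d kap l k mu) 0 a + s * RInt (gf d kap l lam k mu) 0 (p * exp ((INR d - 1)/2 * a)).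

Lemma dS_A d kap l lam k mu s A phi : (2 <= d)%nat ->
  is_derive (fun a => Sf d kap l lam k mu s a phi) A (pi_A d kap l lam k mu s A phi).
Proof.
  intros Hd. unfold Sf.
  set (al := (INR d - 1)/2).
  assert (H1 := dRInt (hf d kap l k mu) A (cont_hf d kap l k mu)).
  assert (H2 := dRInt (gf d kap l lam k mu) (phi * exp (al * A)) (fun y => cont_gf d kap l lam k mu y Hd)).
  assert (H3 : is_derive (fun a => phi * exp (al * a)) A (phi * (al * exp (al * A)))).
  { auto_derive; auto. ring. }
  assert (H4 := is_derive_comp _ _ _ _ _ H2 H3).
  assert (H5 := is_derive_scal _ _ s _ H4).
  assert (H6 := is_derive_plus _ _ _ _ _ H1 H5).
  replace (pi_A d kap l lam k mu s A phi) with (plus (hf d kap l k mu A)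
               (s * scal (phi * (al * exp (al * A)))
                  (gf d kap l lam k mu (phi * exp (al * A))))).
  - eapply is_derive_ext; [|apply H6]. intros; reflexivity.
  - unfold pi_A, pi_phi, hf. rewrite (Rmult_assoc s), Kid by auto. fold al.
    unfold plus, scal; simpl. unfold mult; simpl. ring.
Qed.

Lemma dS_phi d kap l lam k mu s A phi : (2 <= d)%nat ->
  is_derive (fun p => Sf d kap l lam k mu s A p) phi (pi_phi d kap l lam k mu s A phi).
Proof.
  intros Hd. unfold Sf.
  set (al := (INR d - 1)/2).
  assert (H2 := dRInt (gf d kap l lam k mu) (phi * exp (al * A)) (fun y => cont_gf d kap l lam k mu y Hd)).
  assert (H3 : is_derive (fun p => p * exp (al * A)) phi (exp (al * A))).
  { auto_derive; auto. ring. }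
  assert (H4 := is_derive_comp _ _ _ _ _ H2 H3).
  assert (H5 := is_derive_scal _ _ s _ H4).
  assert (H1 : is_derive (fun p : R => RInt (hf d kap l k mu) 0 A) phi 0).
  { apply is_derive_Reals. apply derivable_pt_lim_const. }
  assert (H6 := is_derive_plus _ _ _ _ _ H1 H5).
  replace (pi_phi d kap l lam k mu s A phi) with (plus 0
               (s * scal (exp (al * A))
                  (gf d kap l lam k mu (phi * exp (al * A))))).
  - eapply is_derive_ext; [|apply H6]. intros; reflexivity.
  - unfold pi_phi. rewrite (Rmult_assoc s), Kid by auto. fold al.
    unfold plus, scal; simpl. unfold mult; simpl. ring.
Qed.
Lemma part2 : forall d kap l lam k mu s A phi, (2 <= d)%nat -> 0 < kap -> 0 < l -> dom d kap l lam k mu A phi ->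
       exists v : R,
         is_derive (fun p => pi_A d kap l lam k mu s A p) phi v /\
         is_derive (fun a => pi_phi d kap l lam k mu s a phi) A v.
intros d kap l lam k mu s A phi Hd Hk Hl [HX HA].
pose proof (pexp_ge d Hd) as Hp.
apply le_INR in Hd. simpl in Hd.
unfold dom, pi_A, pi_phi, Xphi, XA in *. eexists. split.
- auto_derive. repeat split; auto. exists (pexp d * phi * rpow_abs phi (pexp d - 2)). apply ra_deriv; auto.
  reflexivity.
- auto_derive. auto.
  replace (Derive (fun x : R => rpow_abs x (pexp d)) phi) with (pexp d * phi * rpow_abs phi (pexp d - 2))
    by (symmetry; apply is_derive_unique; apply ra_deriv; auto).
  replace (INR d * (INR d - 1) / (kap * (kap * 1) * (l * (l * 1))) * mu *
        exp (- (INR d + 1) * A) +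
        k * ((INR d - 1) / (2 * l) * ((INR d - 1) / (2 * l) * 1)) *
        (phi * (phi * 1)) * exp (-2 * A) + lam * rpow_abs phi (pexp d)) with
    (INR d * (INR d - 1) / (kap ^ 2 * l ^ 2) * mu * exp (- (INR d + 1) * A) +
    k * ((INR d - 1) / (2 * l)) ^ 2 * phi ^ 2 * exp (-2 * A) +
    lam * rpow_abs phi (pexp d)) by (field; split; lra).
 
  rewrite <- (ra_sq phi (pexp d)) in *.
  set (R2 := rpow_abs phi (pexp d - 2)) in *.
  set (e1 := exp (- (INR d + 1) * A)) in *.
  set (X := INR d * (INR d - 1) / (kap ^ 2 * l ^ 2) * mu * e1 +
    k * ((INR d - 1) / (2 * l)) ^ 2 * phi ^ 2 * exp (-2 * A) + lam * (phi ^ 2 * R2)) in *.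
  assert (Hsx := sqrt_sqrt X (Rlt_le _ _ HX)).
  assert (Hs0: 0 < sqrt X) by (apply sqrt_lt_R0; auto).
  set (sx := sqrt X) in *. set (sy := sqrt (1 + k * exp (-2 * A) + mu * e1)) in *.
  clearbody sx sy.
  assert (He1: 0 < e1) by apply exp_pos.
  assert (Hmu: mu = (sx*sx - k * ((INR d - 1) / (2 * l)) ^ 2 * phi ^ 2 * exp (-2 * A) - lam * (phi ^ 2 * R2)) / (INR d * (INR d - 1) / (kap ^ 2 * l ^ 2) * e1)).
  { rewrite Hsx. unfold X. field. repeat split; lra. }
  clearbody X. clear Hsx. subst mu. unfold pexp. field. repeat split; lra.
Qed.

Theorem mainTheorem9 :
  forall (d : nat) (kap l lam k mu s : R),
    (2 <= d)%nat -> 0 < kap -> 0 < l ->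
    (k = -1 \/ k = 0 \/ k = 1) ->
    (s = 1 \/ s = -1) ->
    (forall A phi, dom d kap l lam k mu A phi ->
       Ham d kap l lam k A phi (pi_A d kap l lam k mu s A phi)
                               (pi_phi d kap l lam k mu s A phi) = 0)
    /\
    (forall A phi, dom d kap l lam k mu A phi ->
       exists v : R,
         is_derive (fun p => pi_A d kap l lam k mu s A p) phi v /\
         is_derive (fun a => pi_phi d kap l lam k mu s a phi) A v)
    /\
    (forall A0 phi0, dom d kap l lam k mu A0 phi0 ->
       exists eps : R, 0 < eps /\
       exists S : R -> R -> R,
         forall A phi, Rabs (A - A0) < eps -> Rabs (phi - phi0) < eps ->
           dom d kap l lam k mu A phi /\
           is_derive (fun a => S a phi) A (pi_A d kap l lam k mu s A phi) /\
           is_derive (fun p => S A p) phi (pi_phi d kap l lam k mu s A phi) /\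
           Ham d kap l lam k A phi (Derive (fun a => S a phi) A)
                                   (Derive (fun p => S A p) phi) = 0).
Proof.
  intros d kap l lam k mu s Hd Hk Hl Hkk Hs.
  assert (Hs2: s^2 = 1) by (destruct Hs; subst; ring).
  split; [|split].
  - intros A phi [H1 H2]. apply part1; auto; lra.
  - intros A phi Hdom. apply part2; auto.
  - intros A0 phi0 Hdom. destruct (dom_loc d kap l lam k mu A0 phi0 Hd Hdom) as [eps [Heps Hloc]].
    exists eps; split; auto. exists (Sf d kap l lam k mu s). intros A phi HA Hp.
    pose proof (Hloc A phi HA Hp) as [H1 H2].
    split; [split; auto|]. split; [apply dS_A; auto|]. split; [apply dS_phi; auto|].
    replace (Derive (fun a => Sf d kap l lam k mu s a phi) A) with (pi_A d kap l lam k mu s A phi)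
      by (symmetry; apply is_derive_unique; apply dS_A; auto).
    replace (Derive (fun p => Sf d kap l lam k mu s A p) phi) with (pi_phi d kap l lam k mu s A phi)
      by (symmetry; apply is_derive_unique; apply dS_phi; auto).
    apply part1; auto; lra.
Qed.
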